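(* Run the algorithm GBGC (described in the context) on input $(\mathbf e_1,f_1),\dots,(\mathbf e_m,f_m)$, with an arbitrary rule for choosing which critical pair to process next and arbitrary choices of reducers during reduction. Suppose the strict partial orders $<$ on $G$ used in the generalized rewritable criterion are admissible, and suppose the algorithm terminates. Then the returned set $G$ is an S-Gröbner basis for $\mathbf M=\langle(\mathbf e_1,f_1),\dots,(\mathbf e_m,f_m)\rangle$ (and hence $\{g:(\mathbf v,g)\in G\}$ is a Gröbner basis of $\langle f_1,\dots,f_m\rangle$ w.r.t. the term order on $R$).
   Context: Setting: $R=K[x_1,\dots,x_n]$ over a field $K$, $f_1,\dots,f_m\in R$, $\mathbf f=(f_1,\dots,f_m)$, $\mathbf e_i$ the $i$-th unit vector of $R^m$, $\mathbf M=\{(\mathbf u,f)\in R^m\times R:\mathbf u\cdot\mathbf f=f\}$. Fix an arbitrary term order $\prec$ on power products of $R$ and an arbitrary term order $\prec$ on terms $x^\alpha\mathbf e_i$ of $R^m$ (not necessarily related). $\mathrm{lpp}$ = leading power product (leading term for vectors), $\mathrm{lc}$ = leading coefficient; $\mathrm{lpp}(0)=0$ is below every nonzero power product/term. $\mathrm{lpp}(\mathbf u)$ is called the signature of $(\mathbf u,f)$. Critical pairs: for $(\mathbf u,f),(\mathbf v,g)\in\mathbf M$ with $f,g\ne0$, $t=\mathrm{lcm}(\mathrm{lpp}(f),\mathrm{lpp}(g))$, $t_f=t/\mathrm{lpp}(f)$, $t_g=t/\mathrm{lpp}(g)$; if $\mathrm{lpp}(t_f\mathbf u)\succeq\mathrm{lpp}(t_g\mathbf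 v)$ then $[t_f(\mathbf u,f),t_g(\mathbf v,g)]$ is a critical pair of $(\mathbf u,f)$ and $(\mathbf v,g)$, with S-polynomial $t_f(\mathbf u,f)-c\,t_g(\mathbf v,g)=(t_f\mathbf u-ct_g\mathbf v,\,t_ff-ct_gg)$, $c=\mathrm{lc}(f)/\mathrm{lc}(g)$. It is called regular if $\mathrm{lpp}(t_f\mathbf u)\succ\mathrm{lpp}(t_g\mathbf v)$. Generalized rewritable criterion: given a finite $B\subset\mathbf M$ with a strict partial order $<$ on $B$, a multiple $t(\mathbf u,f)$ with $(\mathbf u,f)\in B$, $f\ne0$, $t$ a power product, is gen-rewritable by $B$ if there is $(\mathbf u',f')\in B$ with $\mathrm{lpp}(\mathbf u')\mid\mathrm{lpp}(t\mathbf u)$ and $(\mathbf u',f')<(\mathbf u,f)$. A critical pair $[t_f(\mathbf u,f),t_g(\mathbf v,g)]$ is gen-rewritable by $B$ if $t_f(\mathbf u,f)$ or $t_g(\mathbf v,g)$ is. Reduction: $(\mathbf u,f)$ is reducible by $B$ if there is $(\mathbf v,g)\in B$, $g\ne0$, with $\mathrm{lpp}(g)\mid\mathrm{lpp}(f)$ and $\mathrm{lpp}(\mathbf u-ct\mathbf v)=\mathrm{lpp}(\mathbf u)$, where $c=\mathrm{lc}(f)/\mathrm{lc}(g)$, $t=\mathrm{lpp}(f)/\mathrm{lpp}(g)$; it then one-step reduces to $(\mathbf u-ct\mathbf v,f-ctg)$. ''Reduce by $B$'' means repeating one-step reductions until the element is no longer reducible by $B$. Algorithm GBGC. Initialize $G=\{(\mathbf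 e_i,f_i):1\le i\le m\}$ and CPairs = set of all critical pairs of elements of this $G$; then add $(f_j\mathbf e_i-f_i\mathbf e_j,0)$ to $G$ for all $1\le i<j\le m$. While CPairs is nonempty: choose any critical pair $[t_f(\mathbf u,f),t_g(\mathbf v,g)]$ in CPairs and remove it; if it is regular and not gen-rewritable by the current $G$, then reduce its S-polynomial by the current $G$ to obtain $(\mathbf w,h)$; if $h\ne0$, add to CPairs the critical pair of $(\mathbf w,h)$ and $(\mathbf w',h')$ for every $(\mathbf w',h')\in G$ with $h'\ne0$, and add $(h\mathbf e_i-f_i\mathbf w,0)$ to $G$ for $i=1,\dots,m$; in either case add $(\mathbf w,h)$ to $G$. When CPairs is empty, return $G$. Throughout, $G$ carries a strict partial order $<$ that is updated whenever elements are added, in such a way that the order on the enlarged set restricts to the previous order on the old set. Admissibility: the partial orders are admissible if, for every critical pair $[t_f(\mathbf u,f),t_g(\mathbf v,g)]$ that, when selected from CPairs, is regular and not gen-rewritable by $G$, and whose S-polynomial is reduced to $(\mathbf w,h)$, one has $(\mathbf w,h)<(\mathbf u,f)$ in the updated order on $G\cup\{(\mathbf w,h)\}$. S-Gröbner basis: a finite $G\subset\mathbf M$ such that for every $(\mathbf u,f)\in\mathbf M$ (with $f\ne 0$) there is $(\mathbf v,g)\in G$ with $\mathrm{lpp}(g)\mid\mathrm{lpp}(f)$ and $\mathrm{lpp}(t\mathbf v)\preceq\mathrm{lpp}(\mathbf u)$, where $t=\mathrm{lpp}(f)/\mathrm{lpp}(g)$. *)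

(* Defs.v *)
From HB Require Import structures.
From mathcomp Require Import all_boot all_order all_algebra.
From Stdlib Require Import ClassicalEpsilon Relation_Operators.
Set Implicit Arguments. Unset Strict Implicit. Unset Printing Implicit Defensive.
Import GRing.Theory.
Local Open Scope ring_scope.

Section GBGC.
Variables (K : fieldType) (n m : nat).

Definition mono := {ffun 'I_n -> nat}.
Definition mono1 : mono := [ffun => 0%N].
Definition mmul (a b : mono) : mono := [ffun k => (a k + b k)%N].
Definition mdvd (a b : mono) : bool := [forall k, (a k <= b k)%N].
Definition mquo (b a : mono) : mono := [ffun k => (b k - a k)%N].
Definition mlcm (a b : mono) : mono := [ffun k => maxn (a k) (b k)].

Definition mterm := (mono * 'I_m)%type.
Definition tmul (t : mono) (x : mterm) : mterm := (mmul t x.1, x.2).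
Definition tdvd (x y : mterm) : bool := (x.2 == y.2) && mdvd x.1 y.1.

Definition strict_total (X : eqType) (lt : rel X) : Prop :=
  [/\ irreflexive lt, transitive lt & forall x y, x != y -> lt x y || lt y x].
Definition is_term_order (lt : rel mono) : Prop :=
  [/\ strict_total lt,
      forall a b c, lt a b -> lt (mmul c a) (mmul c b)
    & forall a, a != mono1 -> lt mono1 a].
Definition is_module_term_order (lt : rel mterm) : Prop :=
  [/\ strict_total lt,
      forall x y c, lt x y -> lt (tmul c x) (tmul c y)
    & forall x c, c != mono1 -> lt x (tmul c x)].

Definition mpoly := mono -> K.
Definition mvec := mterm -> K.
Definition lab := (mvec * mpoly)%type.

Definition fsupp (X : eqType) (p : X -> K) : Prop :=
  exists s : seq X, forall x, p x != 0 -> x \in s.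

Definition pzero : mpoly := fun _ => 0.
Definition psub (p q : mpoly) : mpoly := fun a => p a - q a.
Definition pscale (c : K) (p : mpoly) : mpoly := fun a => c * p a.
Definition pmulm (t : mono) (p : mpoly) : mpoly :=
  fun a => if mdvd t a then p (mquo a t) else 0.
Definition mbnd (b : mono) : nat := \big[maxn/0%N]_(k < n) b k.
(* product: sum over all divisors d of b *)
Definition pmul (p q : mpoly) : mpoly := fun b =>
  \sum_(d : {ffun 'I_n -> 'I_(mbnd b).+1} | [forall k, (d k <= b k)%N])
     p [ffun k => nat_of_ord (d k)] * q (mquo b [ffun k => nat_of_ord (d k)]).

Definition vzero : mvec := fun _ => 0.
Definition vsub (u v : mvec) : mvec := fun x => u x - v x.
Definition vscale (c : K) (u : mvec) : mvec := fun x => c * u x.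
Definition vmulm (t : mono) (u : mvec) : mvec :=
  fun x => if mdvd t x.1 then u (mquo x.1 t, x.2) else 0.
Definition vcomp (u : mvec) (i : 'I_m) : mpoly := fun a => u (a, i).
Definition vembed (p : mpoly) (i : 'I_m) : mvec :=
  fun x => if x.2 == i then p x.1 else 0.
Definition unitv (i : 'I_m) : mvec :=
  vembed (fun a => if a == mono1 then 1 else 0) i.
Definition pmulv (p : mpoly) (u : mvec) : mvec := fun x => pmul p (vcomp u x.2) x.1.
Definition vdot (u : mvec) (f : 'I_m -> mpoly) : mpoly :=
  fun a => \sum_(i < m) pmul (vcomp u i) (f i) a.

(* None plays the role of lpp(0) = 0 *)
Definition is_lead (X : eqType) (lt : rel X) (p : X -> K) (o : option X) : Prop :=
  match o with
  | None => forall x, p x = 0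
  | Some a => p a != 0 /\ forall x, p x != 0 -> x = a \/ lt x a
  end.
Definition lead (X : eqType) (lt : rel X) (p : X -> K) : option X :=
  epsilon (inhabits None) (is_lead lt p).
Definition lcoef (X : eqType) (lt : rel X) (p : X -> K) : K :=
  if lead lt p is Some a then p a else 0.

Definition ole (X : eqType) (lt : rel X) (x y : option X) : bool :=
  match x, y with
  | None, _ => true
  | Some _, None => false
  | Some a, Some b => (a == b) || lt a b
  end.
Definition olt (X : eqType) (lt : rel X) (x y : option X) : bool :=
  match x, y with
  | _, None => false
  | None, Some _ => true
  | Some a, Some b => lt a b
  end.
Definition odvd (x y : option mterm) : bool :=
  match x, y with
  | Some a, Some b => tdvd a b
  | None, None => true
  | _, _ => false
  end.

Variables (ltR : rel mono) (ltM : rel mterm) (f : 'I_m -> mpoly).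

Definition lppR (p : mpoly) := lead ltR p.
Definition lppM (u : mvec) := lead ltM u.
Definition lcR (p : mpoly) := lcoef ltR p.
Definition pnz (p : mpoly) : bool := lppR p != None.

Definition inM (x : lab) : Prop := [/\ fsupp x.1, fsupp x.2 & x.2 = vdot x.1 f].

Definition lab0 : lab := (vzero, pzero).
Definition gget (G : seq lab) (i : nat) : lab := nth lab0 G i.

Definition is_SGB (G : seq lab) : Prop :=
  (forall k, (k < size G)%N -> inM (gget G k)) /\
  forall x : lab, inM x -> x.2 <> pzero ->
    exists k a b, [/\ (k < size G)%N, lppR x.2 = Some a,
      lppR (gget G k).2 = Some b, mdvd b a &
      ole ltM (lppM (vmulm (mquo a b) (gget G k).1)) (lppM x.1)].

Definition in_ideal (p : mpoly) : Prop := exists u : mvec, fsupp u /\ p = vdot u f.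

Definition is_GB (Gp : seq mpoly) : Prop :=
  (forall k, (k < size Gp)%N -> in_ideal (nth pzero Gp k)) /\
  forall p, in_ideal p -> p <> pzero ->
    exists k a b, [/\ (k < size Gp)%N, lppR p = Some a,
      lppR (nth pzero Gp k) = Some b & mdvd b a].

Definition cp_t (G : seq lab) (i j : nat) : mono :=
  match lppR (gget G i).2, lppR (gget G j).2 with
  | Some a, Some b => mquo (mlcm a b) a
  | _, _ => mono1
  end.
Definition cp_sig (G : seq lab) (i j : nat) := lppM (vmulm (cp_t G i j) (gget G i).1).
(* the critical pair of G_i and G_j: oriented so that the first signature is larger *)
Definition cpair (G : seq lab) (i j : nat) : nat * nat :=
  if ole ltM (cp_sig G j i) (cp_sig G i j) then (i, j) else (j, i).
Definition cp_regular (G : seq lab) (p : nat * nat) : bool :=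
  olt ltM (cp_sig G p.2 p.1) (cp_sig G p.1 p.2).
Definition spoly (G : seq lab) (p : nat * nat) : lab :=
  let c := lcR (gget G p.1).2 / lcR (gget G p.2).2 in
  (vsub (vmulm (cp_t G p.1 p.2) (gget G p.1).1)
        (vscale c (vmulm (cp_t G p.2 p.1) (gget G p.2).1)),
   psub (pmulm (cp_t G p.1 p.2) (gget G p.1).2)
        (pscale c (pmulm (cp_t G p.2 p.1) (gget G p.2).2))).

Definition gen_rewritable_mult (ord : nat -> nat -> Prop) (G : seq lab)
  (t : mono) (i : nat) : Prop :=
  exists2 k, (k < size G)%N &
    odvd (lppM (gget G k).1) (lppM (vmulm t (gget G i).1)) /\ ord k i.
Definition gen_rewritable (ord : nat -> nat -> Prop) (G : seq lab)
  (p : nat * nat) : Prop :=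
  gen_rewritable_mult ord G (cp_t G p.1 p.2) p.1 \/
  gen_rewritable_mult ord G (cp_t G p.2 p.1) p.2.

Definition red1 (G : seq lab) (x y : lab) : Prop :=
  exists k a b, [/\ (k < size G)%N, lppR x.2 = Some a,
    lppR (gget G k).2 = Some b, mdvd b a &
    let c := lcR x.2 / lcR (gget G k).2 in
    let t := mquo a b in
    lppM (vsub x.1 (vscale c (vmulm t (gget G k).1))) = lppM x.1 /\
    y = (vsub x.1 (vscale c (vmulm t (gget G k).1)),
         psub x.2 (pscale c (pmulm t (gget G k).2)))].
Definition reducible (G : seq lab) (x : lab) : Prop := exists y, red1 G x y.
Definition reduce_to (G : seq lab) (x y : lab) : Prop :=
  clos_refl_trans lab (red1 G) x y /\ ~ reducible G y.

Definition G_init : seq lab :=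
  [seq (unitv i, f i) | i <- enum 'I_m] ++
  [seq (vsub (vembed (f p.2) p.1) (vembed (f p.1) p.2), pzero)
     | p : 'I_m * 'I_m <- [seq (i, j) | i <- enum 'I_m, j <- enum 'I_m] & ((p.1 : nat) < p.2)%N].

Definition CP_init : seq (nat * nat) :=
  [seq cpair G_init p.1 p.2
     | p <- [seq (i, j) | i <- iota 0 m, j <- iota 0 m]
     & [&& (p.1 < p.2)%N, pnz (gget G_init p.1).2 & pnz (gget G_init p.2).2]].

Definition remove_at (s : seq (nat * nat)) (k : nat) := take k s ++ drop k.+1 s.

Definition syz_new (w : mvec) (h : mpoly) : seq lab :=
  [seq (vsub (vembed h i) (pmulv (f i) w), pzero) | i <- enum 'I_m].

Definition state := (seq lab * seq (nat * nat))%type.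

(* one iteration of the while loop; arbitrary choice of the pair (index k)
   and of reducers; [ord] is the (global, index based) strict partial order
   on G, and the step includes the admissibility requirement
   (w,h) < (u,f) for the processed regular, non gen-rewritable pair. *)
Definition gbgc_step (ord : nat -> nat -> Prop) (st st' : state) : Prop :=
  let G := st.1 in let CP := st.2 in
  exists2 k, (k < size CP)%N &
    let p := nth (0%N, 0%N) CP k in
    let CP0 := remove_at CP k in
    ((~~ cp_regular G p \/ gen_rewritable ord G p) /\ st' = (G, CP0))
    \/
    (cp_regular G p /\ ~ gen_rewritable ord G p /\
     exists w h, reduce_to G (spoly G p) (w, h) /\
       ((h = pzero /\ st' = (rcons G (w, h), CP0) /\ ord (size G) p.1)
        \/
        (h <> pzero /\
         let G' := rcons (G ++ syz_new w h) (w, h) in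
         st' = (G', CP0 ++ [seq cpair G' (size G + m)%N l
                              | l <- iota 0 (size G) & pnz (gget G l).2]) /\
         ord (size G + m)%N p.1))).

Definition strict_partial_order (ord : nat -> nat -> Prop) : Prop :=
  (forall x, ~ ord x x) /\ (forall x y z, ord x y -> ord y z -> ord x z).

End GBGC.

(* Main.v *)
Require Import Defs.
From HB Require Import structures.
From mathcomp Require Import all_boot all_order all_algebra.
From mathcomp Require Import zify.
From Stdlib Require Import Relation_Operators ClassicalEpsilon.
Set Implicit Arguments. Unset Strict Implicit. Unset Printing Implicit Defensive.
Import GRing.Theory.
Local Open Scope ring_scope.

Section Mono.
Variable n : nat.
Implicit Types a b c t : mono n.

Lemma mono_eq a b : (forall k, a k = b k) -> a = b.
Proof. by move=> h; apply/ffunP=> k; apply: h. Qed.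

Lemma mdvdP a b : reflect (forall k, (a k <= b k)%N) (mdvd a b).
Proof. exact: forallP. Qed.

Lemma mmulE a b k : mmul a b k = (a k + b k)%N. Proof. by rewrite ffunE. Qed.
Lemma mquoE a b k : mquo a b k = (a k - b k)%N. Proof. by rewrite ffunE. Qed.
Lemma mlcmE a b k : mlcm a b k = maxn (a k) (b k). Proof. by rewrite ffunE. Qed.
Lemma mono1E k : mono1 n k = 0%N. Proof. by rewrite ffunE. Qed.

Ltac mono_solve := apply: mono_eq => k; rewrite !(mmulE, mquoE, mlcmE, mono1E); lia.

Lemma mquo_mmul t a : mquo (mmul t a) t = a. Proof. mono_solve. Qed.
Lemma mquo_mmulr t a : mquo (mmul t a) a = t. Proof. mono_solve. Qed.
Lemma mdvd_mmul t a : mdvd t (mmul t a).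
Proof. by apply/mdvdP=> k; rewrite mmulE leq_addr. Qed.
Lemma mdvd_mmulr t a : mdvd a (mmul t a).
Proof. by apply/mdvdP=> k; rewrite mmulE leq_addl. Qed.
Lemma mmul_mquo t x : mdvd t x -> mmul t (mquo x t) = x.
Proof. move/mdvdP=> h; apply: mono_eq => k; rewrite mmulE mquoE; have := h k; lia. Qed.
Lemma mmul_mquor t x : mdvd t x -> mmul (mquo x t) t = x.
Proof. move/mdvdP=> h; apply: mono_eq => k; rewrite mmulE mquoE; have := h k; lia. Qed.
Lemma mmulC a b : mmul a b = mmul b a. Proof. mono_solve. Qed.
Lemma mmulA a b c : mmul a (mmul b c) = mmul (mmul a b) c. Proof. mono_solve. Qed.
Lemma mmul1 a : mmul (mono1 n) a = a. Proof. mono_solve. Qed.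
Lemma mquo1 a : mquo a (mono1 n) = a. Proof. mono_solve. Qed.
Lemma mmul_inj t a b : mmul t a = mmul t b -> a = b.
Proof. by move=> h; rewrite -(mquo_mmul t a) h mquo_mmul. Qed.
Lemma mdvd1 a : mdvd (mono1 n) a.
Proof. by apply/mdvdP=> k; rewrite mono1E. Qed.
Lemma mdvd_refl a : mdvd a a. Proof. by apply/mdvdP. Qed.
Lemma mdvd_trans a b c : mdvd a b -> mdvd b c -> mdvd a c.
Proof. move=> /mdvdP h1 /mdvdP h2; apply/mdvdP=> k; exact: leq_trans (h1 k) (h2 k). Qed.
Lemma mdvd_quo a b : mdvd a b -> mdvd (mquo b a) b.
Proof. move=> /mdvdP h; apply/mdvdP=> k; rewrite mquoE; lia. Qed.
Lemma mquo_quo a b : mdvd a b -> mquo b (mquo b a) = a.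
Proof. move/mdvdP=> h; apply: mono_eq => k; rewrite !mquoE; have := h k; lia. Qed.
Lemma mquo_inj x a b : mdvd a x -> mdvd b x -> mquo x a = mquo x b -> a = b.
Proof. by move=> ha hb e; rewrite -(mquo_quo ha) e mquo_quo. Qed.

Definition bfun (b : mono n) := {ffun 'I_n -> 'I_(mbnd b).+1}.
Definition bval (b : mono n) (d : bfun b) : mono n := [ffun k => nat_of_ord (d k)].
Definition divs (b : mono n) : seq (mono n) :=
  map (@bval b) (filter (fun d : bfun b => [forall k, (d k <= b k)%N]) (enum (bfun b))).

Lemma le_mbnd b k : (b k <= mbnd b)%N.
Proof. rewrite /mbnd. exact: (@leq_bigmax _ (fun k => b k) k). Qed.

Lemma mem_divs b d : (d \in divs b) = mdvd d b.
Proof.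
apply/mapP/idP.
  case=> e; rewrite mem_filter => /andP[/forallP h _] ->.
  by apply/mdvdP=> k; rewrite ffunE; apply: h.
move=> /mdvdP h.
exists [ffun k => inord (d k) : 'I_(mbnd b).+1].
  rewrite mem_filter mem_enum andbT; apply/forallP=> k.
  rewrite ffunE inordK ?h //; rewrite ltnS; exact: leq_trans (h k) (le_mbnd b k).
apply: mono_eq => k; rewrite !ffunE inordK //.
rewrite ltnS; exact: leq_trans (h k) (le_mbnd b k).
Qed.

Lemma uniq_divs b : uniq (divs b).
Proof.
rewrite map_inj_in_uniq; first by apply: filter_uniq; apply: enum_uniq.
move=> d e _ _ h; apply/ffunP=> k; apply: val_inj.
by have := congr1 (fun f : mono n => f k) h; rewrite !ffunE.
Qed.
End Mono.

Section Sums.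
Variable R : nmodType.
Lemma big_uniq_eq (T : eqType) (s1 s2 : seq T) (F : T -> R) :
  uniq s1 -> uniq s2 -> s1 =i s2 -> \sum_(x <- s1) F x = \sum_(x <- s2) F x.
Proof. by move=> u1 u2 e; apply: perm_big; apply: uniq_perm. Qed.

Lemma uniq_pairs (T1 T2 : eqType) (s : seq T1) (t : T1 -> seq T2) :
  uniq s -> (forall x, x \in s -> uniq (t x)) -> uniq [seq (x, y) | x <- s, y <- t x].
Proof.
elim: s => //= x s IH /andP[xs us] ut.
rewrite cat_uniq map_inj_uniq ?ut ?mem_head //; last by move=> ? ? [].
rewrite IH ?andbT //; last by move=> z zs; apply: ut; rewrite inE zs orbT.
apply/hasPn=> p /allpairsPdep [z [y [zs _ ->]]].
apply/mapP=> -[y' _ [ez _]]; by move: xs; rewrite -ez zs.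
Qed.
End Sums.
Section PMul.
Variables (K : fieldType) (n : nat).
Implicit Types p q r : mpoly K n.

Lemma pmulE p q b : pmul p q b = \sum_(d <- divs b) p d * q (mquo b d).
Proof.
rewrite /divs big_map big_filter /pmul big_enum_cond /=.
by [] || (apply: eq_bigl => d; rewrite ?inE).
Qed.

Ltac mdvd_lia := repeat match goal with H : is_true (mdvd _ _) |- _ => move/mdvdP: H => H end;
  let k := fresh "k" in apply/mdvdP => k;
  repeat match goal with H : forall _, is_true (leq _ _) |- _ => move: (H k); clear H end;
  rewrite ?(mmulE, mquoE, mlcmE, mono1E); lia.

Lemma pmul_eq p p' q q' b : (forall x, p x = p' x) -> (forall x, q x = q' x) ->
  pmul p q b = pmul p' q' b.
Proof. by move=> h1 h2; rewrite !pmulE; apply: eq_bigr => d _; rewrite h1 h2. Qed.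

Lemma pmul_subl p q r b : pmul (psub p q) r b = pmul p r b - pmul q r b.
Proof. by rewrite !pmulE -sumrB; apply: eq_bigr => d _; rewrite /psub mulrBl. Qed.

Lemma pmul_scalel c p r b : pmul (pscale c p) r b = c * pmul p r b.
Proof. by rewrite !pmulE mulr_sumr; apply: eq_bigr => d _; rewrite /pscale mulrA. Qed.

Lemma pmul0l p q b : (forall x, p x = 0) -> pmul p q b = 0.
Proof. by move=> h; rewrite pmulE big1 // => d _; rewrite h mul0r. Qed.

Lemma pmul_sumr (I : finType) p (Q : I -> mpoly K n) b :
  pmul p (fun a => \sum_i Q i a) b = \sum_i pmul p (Q i) b.
Proof.
rewrite pmulE (eq_bigr (fun d => \sum_i p d * Q i (mquo b d))); last by move=> d _; rewrite mulr_sumr.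
rewrite exchange_big /=; apply: eq_bigr => i _; by rewrite pmulE.
Qed.

Lemma pmul_sumr' (I : finType) p (Q : I -> mpoly K n) b :
  \sum_i pmul p (Q i) b = pmul p (fun a => \sum_i Q i a) b.
Proof. by rewrite pmul_sumr. Qed.

Definition delta : mpoly K n := fun a => if a == mono1 n then 1 else 0.

Lemma pmul1l q b : pmul delta q b = q b.
Proof.
rewrite pmulE (bigD1_seq (mono1 n)) ?uniq_divs ?mem_divs ?mdvd1 //=.
rewrite big1 ?addr0 /delta ?eqxx ?mul1r ?mquo1 // => d /negbTE ->; by rewrite mul0r.
Qed.


Lemma pmulC p q b : pmul p q b = pmul q p b.
Proof.
rewrite !pmulE (@big_uniq_eq _ _ (divs b) (map (mquo b) (divs b))).
- rewrite big_map; apply: eq_big_seq => d; rewrite mem_divs => h.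
  by rewrite mquo_quo // mulrC.
- exact: uniq_divs.
- rewrite map_inj_in_uniq ?uniq_divs // => x y; rewrite !mem_divs => hx hy; exact: mquo_inj.
move=> d; rewrite mem_divs; apply/idP/mapP.
  move=> h; exists (mquo b d); first by rewrite mem_divs mdvd_quo.
  by rewrite mquo_quo.
by case=> e; rewrite mem_divs => h ->; rewrite mdvd_quo.
Qed.

Lemma pmul_mulml t p q b : pmul (pmulm t p) q b = pmulm t (pmul p q) b.
Proof.
rewrite /pmulm; case: ifP => tb; last first.
  rewrite pmulE big_seq big1 // => d; rewrite mem_divs => db.
  case: ifP => td; last by rewrite mul0r.
  by rewrite (mdvd_trans td db) in tb.
rewrite !pmulE (eq_bigr (fun d => if mdvd t d then p (mquo d t) * q (mquo b d) else 0)); last by move=> d _; case: ifP; rewrite ?mul0r.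
rewrite -big_mkcond -big_filter (@big_uniq_eq _ _ _ (map (mmul t) (divs (mquo b t)))).
- rewrite big_map; apply: eq_bigr => e _; rewrite mquo_mmul; congr (_ * q _).
  by apply: mono_eq => k; rewrite !mquoE mmulE; lia.
- by rewrite filter_uniq ?uniq_divs.
- by rewrite map_inj_uniq ?uniq_divs //; apply: mmul_inj.
move=> d; rewrite mem_filter mem_divs; apply/andP/mapP.
  case=> td db; exists (mquo d t); last by rewrite mmul_mquo.
  by rewrite mem_divs; mdvd_lia.
case=> e; rewrite mem_divs => eb ->; rewrite mdvd_mmul; split=> //.
by mdvd_lia.
Qed.

Lemma pmulA p q r b : pmul (pmul p q) r b = pmul p (pmul q r) b.
Proof.
pose F (pr : mono n * mono n) := p pr.2 * q (mquo pr.1 pr.2) * r (mquo b pr.1).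
transitivity (\sum_(pr <- [seq (d, e) | d <- divs b, e <- divs d]) F pr).
  rewrite big_allpairs_dep pmulE; apply: eq_bigr => d _; by rewrite pmulE mulr_suml.
transitivity (\sum_(pr <- [seq (e, d) | e <- divs b, d <- divs (mquo b e)]) F (mmul pr.1 pr.2, pr.1)).
  rewrite -(big_map (fun pr => (mmul pr.1 pr.2, pr.1)) xpredT F).
  apply: big_uniq_eq.
  - by apply: uniq_pairs => [|d _]; exact: uniq_divs.
  - rewrite map_inj_in_uniq; first by apply: uniq_pairs => [|d _]; exact: uniq_divs.
    move=> [e1 d1] [e2 d2] _ _ [h1 h2] /=; subst; congr pair; exact: mmul_inj h1.
  - move=> [d e]; apply/allpairsPdep/mapP.
      move=> [d0 [e0 [hd he [-> ->]]]]; rewrite mem_divs in hd; rewrite mem_divs in he.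
      exists (e0, mquo d0 e0); last by rewrite /= mmul_mquo.
      apply/allpairsPdep; exists e0, (mquo d0 e0); split=> //; rewrite mem_divs //.
        exact: mdvd_trans he hd.
      by mdvd_lia.
    move=> [[e0 d0] /allpairsPdep [e1 [d1 [he hd [-> ->]]]] [-> ->]].
    rewrite mem_divs in he; rewrite mem_divs in hd.
    exists (mmul e1 d1), e1; split=> //; rewrite mem_divs ?mdvd_mmul //; by mdvd_lia.
rewrite big_allpairs_dep pmulE; apply: eq_bigr => e _; rewrite pmulE mulr_sumr.
apply: eq_bigr => d _; rewrite /F /= mquo_mmul -mulrA; congr (_ * (_ * r _)).
by apply: mono_eq => k; rewrite !(mquoE, mmulE); lia.
Qed.
End PMul.

From Stdlib Require Import FunctionalExtensionality.

Section Supp.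
Variable K : fieldType.
Lemma sum_nz (T : eqType) (s : seq T) (F : T -> K) :
  \sum_(x <- s) F x != 0 -> exists2 x, x \in s & F x != 0.
Proof.
elim: s => [|x s IH]; first by rewrite big_nil eqxx.
rewrite big_cons; have [h|h] := eqVneq (F x) 0.
  by rewrite h add0r => /IH [y ys hy]; exists y => //; rewrite inE ys orbT.
by move=> _; exists x => //; rewrite mem_head.
Qed.
End Supp.

Section Vec.
Variables (K : fieldType) (n m : nat) (f : 'I_m -> mpoly K n).
Implicit Types (u v w : mvec K n m) (p q : mpoly K n).

Lemma vdot_sub u v a : vdot (vsub u v) f a = vdot u f a - vdot v f a.
Proof. rewrite /vdot -sumrB; apply: eq_bigr => i _; exact: pmul_subl. Qed.

Lemma vdot_scale c u a : vdot (vscale c u) f a = c * vdot u f a.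
Proof. rewrite /vdot mulr_sumr; apply: eq_bigr => i _; exact: pmul_scalel. Qed.

Lemma vdot_mulm t u a : vdot (vmulm t u) f a = pmulm t (vdot u f) a.
Proof.
rewrite /vdot (eq_bigr (fun i => pmulm t (pmul (vcomp u i) (f i)) a)).
  by rewrite /pmulm; case: ifP => // _; rewrite big1.
by move=> i _; rewrite -pmul_mulml; apply: pmul_eq.
Qed.

Lemma vdot_embed p i a : vdot (vembed p i) f a = pmul p (f i) a.
Proof.
rewrite /vdot (bigD1 i) //= big1 ?addr0.
  by apply: pmul_eq => // x; rewrite /vcomp /vembed /= eqxx.
move=> j /negbTE ji; apply: pmul0l => x; by rewrite /vcomp /vembed /= ji.
Qed.

Lemma vdot_pmulv p w a : vdot (pmulv p w) f a = pmul p (vdot w f) a.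
Proof.
rewrite /vdot (eq_bigr (fun i => pmul p (pmul (vcomp w i) (f i)) a)).
  by rewrite pmul_sumr'.
by move=> i _; rewrite -pmulA; apply: pmul_eq.
Qed.

Lemma vdot_unitv i a : vdot (@unitv K n m i) f a = f i a.
Proof. by rewrite /unitv vdot_embed -(pmul1l (f i) a); apply: pmul_eq. Qed.

Lemma vdot0 u : (forall x, u x = 0) -> forall a, vdot u f a = 0.
Proof. move=> h a; rewrite /vdot big1 // => i _; apply: pmul0l => x; exact: h. Qed.

Lemma fsupp_sub (X : eqType) (A B : X -> K) : fsupp A -> fsupp B -> fsupp (fun x => A x - B x).
Proof.
move=> [s1 h1] [s2 h2]; exists (s1 ++ s2) => x hx; rewrite mem_cat.
case: (boolP (A x != 0)) => [ax|]; first by rewrite (h1 x ax).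
rewrite negbK => /eqP a0; rewrite (h2 x) ?orbT //; apply: contra hx => /eqP ->; by rewrite a0 subr0.
Qed.
Lemma fsupp_scale (X : eqType) c (A : X -> K) : fsupp A -> fsupp (fun x => c * A x).
Proof. move=> [s h]; exists s => x hx; apply: h; apply: contra hx => /eqP ->; by rewrite mulr0. Qed.
Lemma fsupp0 (X : eqType) (A : X -> K) : (forall x, A x = 0) -> fsupp A.
Proof. by move=> h; exists [::] => x; rewrite h eqxx. Qed.
Lemma fsupp_vsub u v : fsupp u -> fsupp v -> fsupp (vsub u v). Proof. exact: fsupp_sub. Qed.
Lemma fsupp_psub p q : fsupp p -> fsupp q -> fsupp (psub p q). Proof. exact: fsupp_sub. Qed.
Lemma fsupp_vscale c u : fsupp u -> fsupp (vscale c u). Proof. exact: fsupp_scale. Qed.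
Lemma fsupp_pscale c p : fsupp p -> fsupp (pscale c p). Proof. exact: fsupp_scale. Qed.

Lemma fsupp_vmulm t u : fsupp u -> fsupp (vmulm t u).
Proof.
move=> [s h]; exists (map (tmul t) s) => x; rewrite /vmulm; case: ifP => [td hx|_]; last by rewrite eqxx.
apply/mapP; exists (mquo x.1 t, x.2); first exact: h.
by case: x td hx => a i /= td _; rewrite /tmul /= mmul_mquo.
Qed.
Lemma fsupp_pmulm t p : fsupp p -> fsupp (pmulm t p).
Proof.
move=> [s h]; exists (map (mmul t) s) => x; rewrite /pmulm; case: ifP => [td hx|_]; last by rewrite eqxx.
by apply/mapP; exists (mquo x t); [exact: h | rewrite mmul_mquo].
Qed.
Lemma fsupp_vembed p (i : 'I_m) : fsupp p -> fsupp (vembed p i).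
Proof.
move=> [s h]; exists (map (fun a => (a, i)) s) => x; rewrite /vembed.
case: ifP => [/eqP xi hx|_]; last by rewrite eqxx.
apply/mapP; exists x.1; first exact: h.
by case: x xi hx => a j /= ->.
Qed.
Lemma fsupp_unitv i : fsupp (@unitv K n m i).
Proof.
exists [:: (mono1 n, i)] => x; rewrite /unitv /vembed.
case: ifP => [/eqP xi|_]; last by rewrite eqxx. case: ifP => [/eqP x1 _|_]; last by rewrite eqxx. by case: x xi x1 => a j /= -> ->; rewrite mem_head.
Qed.

Lemma pmul_supp p q b : pmul p q b != 0 ->
  exists d, [/\ p d != 0, q (mquo b d) != 0 & mdvd d b].
Proof.
rewrite pmulE => /sum_nz [d dd hpq].
rewrite mem_divs in dd; exists d; split=> //; apply: contra hpq => /eqP h.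
  by rewrite h mul0r. by rewrite h mulr0.
Qed.

Lemma fsupp_pmulv p w : fsupp p -> fsupp w -> fsupp (pmulv p w).
Proof.
move=> [s1 h1] [s2 h2]; exists [seq tmul d y | d <- s1, y <- s2] => x hx.
have [d [pd wd dd]] := pmul_supp hx.
have -> : x = tmul d (mquo x.1 d, x.2) by case: x dd {hx wd} => a i /= dd; rewrite /tmul /= mmul_mquo.
by apply: allpairs_f; [exact: h1 | exact: h2].
Qed.
End Vec.

Section Lead.
Variables (K : fieldType) (X : eqType) (lt : rel X).
Hypothesis hlt : strict_total lt.
Implicit Types A B : X -> K.

Lemma lt_irr x : ~~ lt x x. Proof. by case: hlt => h _ _; rewrite h. Qed.
Lemma lt_trans y x z : lt x y -> lt y z -> lt x z. Proof. by case: hlt => _ h _; apply: h. Qed.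
Lemma lt_total x y : x != y -> lt x y || lt y x. Proof. by case: hlt => _ _ h; apply: h. Qed.
Lemma lt_asym x y : lt x y -> lt y x -> False.
Proof. by move=> h1 h2; have := lt_irr x; rewrite (lt_trans h1 h2). Qed.

Lemma is_lead_uniq A o1 o2 : is_lead lt A o1 -> is_lead lt A o2 -> o1 = o2.
Proof.
case: o1 => [a|]; case: o2 => [b|] //=.
- move=> [ha h1] [hb h2]; case: (h1 b hb) => [->//|ba]; case: (h2 a ha) => [->//|ab].
  by case: (lt_asym ab ba).
- by move=> [ha _] h; rewrite h eqxx in ha.
- by move=> h [hb _]; rewrite h eqxx in hb.
Qed.

Lemma lead_eq A o : is_lead lt A o -> lead lt A = o.
Proof.
move=> h; rewrite /lead.
have := epsilon_spec (inhabits None) (is_lead lt A) (ex_intro _ o h).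
by move/is_lead_uniq; apply.
Qed.

Lemma lead_ex A : fsupp A -> exists o, is_lead lt A o.
Proof.
case=> s hs.
suff [o ho] : exists o, match o with
   | None => forall x, x \in s -> A x = 0
   | Some a => A a != 0 /\ forall x, x \in s -> A x != 0 -> x = a \/ lt x a end.
  exists o; case: o ho => [a [ha h]|h] /=; first by split=> // x hx; apply: h => //; apply: hs.
  move=> x; apply/eqP; apply: contraT => hx; move/eqP: (h x (hs x hx)); by rewrite (negbTE hx).
elim: s {hs} => [|y s [o ho]]; first by exists None.
have [ay|ay] := eqVneq (A y) 0.
  exists o; case: o ho => [a [ha h]|h]; last by move=> x; rewrite inE => /orP[/eqP->|/h].
  split=> // x; rewrite inE => /orP[/eqP->|/h //]; by rewrite ay eqxx.
case: o ho => [a [ha h]|h].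
  have [ya|ya] := eqVneq y a.
    exists (Some a); split=> // x; rewrite inE => /orP[/eqP-> _|/h //]; by left.
  case/orP: (lt_total ya) => yl.
    exists (Some a); split=> // x; rewrite inE => /orP[/eqP-> _|/h //]; by right.
  exists (Some y); split=> // x; rewrite inE => /orP[/eqP-> _|xs hx]; first by left.
  case: (h x xs hx) => [->|xa]; right=> //; exact: lt_trans xa yl.
exists (Some y); split=> // x; rewrite inE => /orP[/eqP-> _|xs]; first by left.
by rewrite (h x xs) eqxx.
Qed.

Lemma lead_spec A : fsupp A -> is_lead lt A (lead lt A).
Proof. by move=> /lead_ex [o ho]; rewrite (lead_eq ho). Qed.

Lemma lead_None A : lead lt A = None -> fsupp A -> forall x, A x = 0.
Proof. by move=> h /lead_spec; rewrite h. Qed.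

Lemma lead_Some A a : fsupp A -> lead lt A = Some a ->
  A a != 0 /\ forall x, A x != 0 -> x = a \/ lt x a.
Proof. by move=> /lead_spec + h; rewrite h. Qed.

Lemma lead_nz A : fsupp A -> (exists x, A x != 0) -> exists a, lead lt A = Some a.
Proof.
move=> /lead_spec; case: (lead lt A) => [a|] h; first by exists a.
by case=> x; rewrite h eqxx.
Qed.

Lemma lead_sub_low A B c a ob : is_lead lt A (Some a) -> is_lead lt B ob ->
  olt lt ob (Some a) -> is_lead lt (fun x => A x - c * B x) (Some a).
Proof.
move=> [ha hA]; case: ob => [b|] hB /=.
  move: hB => [hb hB] ba.
  have Ba : B a = 0.
    apply/eqP; apply: contraT => hba; case: (hB a hba) => [e|ab].
      by rewrite e (negbTE (lt_irr b)) in ba.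
    by case: (lt_asym ab ba).
  split; first by rewrite Ba mulr0 subr0.
  move=> x hx.
  case: (boolP (A x != 0)) => [/hA //|]; rewrite negbK => /eqP ax.
  have bx : B x != 0 by apply: contra hx => /eqP ->; rewrite ax mulr0 subr0.
  right; case: (hB x bx) => [->//|xb]; exact: lt_trans xb ba.
move: hB => /= hB; split; first by rewrite hB mulr0 subr0.
move=> x; rewrite hB mulr0 subr0; exact: hA.
Qed.

Lemma lead_sub_high A B c a b : is_lead lt A (Some a) -> is_lead lt B (Some b) ->
  lt a b -> c != 0 -> is_lead lt (fun x => A x - c * B x) (Some b).
Proof.
move=> [ha hA] [hb hB] ab c0.
have Ab : A b = 0.
  apply/eqP; apply: contraT => hab; case: (hA b hab) => [e|ba].
    by rewrite e (negbTE (lt_irr a)) in ab.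
  by case: (lt_asym ab ba).
split; first by rewrite Ab sub0r oppr_eq0 mulf_neq0.
move=> x hx.
case: (boolP (B x != 0)) => [/hB //|]; rewrite negbK => /eqP bx.
have ax : A x != 0 by apply: contra hx => /eqP ->; rewrite bx mulr0 subr0.
right; case: (hA x ax) => [->//|xa]; exact: lt_trans xa ab.
Qed.

Lemma lead_sub_cancel A B a : is_lead lt A (Some a) -> is_lead lt B (Some a) ->
  forall x, A x - (A a / B a) * B x != 0 -> lt x a.
Proof.
move=> [ha hA] [hb hB] x hx.
have xa : x != a by apply: contraTneq hx => ->; rewrite divfK // subrr eqxx.
case: (boolP (A x != 0)) => [/hA [e|//]|]; first by rewrite e eqxx in xa.
rewrite negbK => /eqP ax.
have bx : B x != 0 by apply: contra hx => /eqP ->; rewrite ax mulr0 subr0.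
by case: (hB x bx) => [e|//]; rewrite e eqxx in xa.
Qed.

Lemma olt_lead_of A a : fsupp A -> (forall x, A x != 0 -> lt x a) -> olt lt (lead lt A) (Some a).
Proof.
move=> /lead_spec; case: (lead lt A) => [b [hb _]|] //= h; exact: h.
Qed.
End Lead.

Section Orders.
Variables (K : fieldType) (n m : nat) (ltR : rel (mono n)) (ltM : rel (mterm n m)).
Hypotheses (hR : is_term_order ltR) (hM : is_module_term_order ltM).

Lemma tmulE t (x : mterm n m) : tmul t x = (mmul t x.1, x.2). Proof. by []. Qed.
Lemma tmulA s t (y : mterm n m) : tmul s (tmul t y) = tmul (mmul s t) y.
Proof. by rewrite !tmulE /= mmulA. Qed.
Lemma tmul1 (y : mterm n m) : tmul (mono1 n) y = y.
Proof. by case: y => a i; rewrite tmulE mmul1. Qed.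
Lemma tmul_inj t (x y : mterm n m) : tmul t x = tmul t y -> x = y.
Proof. by case: x => a i; case: y => b j [/mmul_inj -> ->]. Qed.
Lemma tdvd_tmul (y z : mterm n m) : tdvd y z -> z = tmul (mquo z.1 y.1) y.
Proof. by case: y => a i; case: z => b j /andP[/= /eqP -> h]; rewrite tmulE /= mmul_mquor. Qed.
Lemma tdvd_tmulr t (y : mterm n m) : tdvd y (tmul t y).
Proof. by rewrite /tdvd /= eqxx mdvd_mmulr. Qed.
Lemma tdvd_trans (x y z : mterm n m) : tdvd x y -> tdvd y z -> tdvd x z.
Proof.
rewrite /tdvd => /andP[/eqP -> h1] /andP[/eqP -> h2]; by rewrite eqxx (mdvd_trans h1 h2).
Qed.

Lemma hM_strict : strict_total ltM. Proof. by case: hM. Qed.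
Lemma hR_strict : strict_total ltR. Proof. by case: hR. Qed.

Lemma ltM_mul c x y : ltM x y -> ltM (tmul c x) (tmul c y). Proof. by case: hM => _ h _; apply: h. Qed.
Lemma ltR_mul c x y : ltR x y -> ltR (mmul c x) (mmul c y). Proof. by case: hR => _ h _; apply: h. Qed.

Lemma ltM_mul_inv c x y : ltM (tmul c x) (tmul c y) -> ltM x y.
Proof.
move=> h; have [e|ne] := eqVneq x y; first by rewrite e (negbTE (lt_irr hM_strict _)) in h.
case/orP: (lt_total hM_strict ne) => // yx.
by case: (lt_asym hM_strict h (ltM_mul c yx)).
Qed.

Lemma ltM_le_mul c x : x = tmul c x \/ ltM x (tmul c x).
Proof.
have [->|ne] := eqVneq c (mono1 n); first by rewrite tmul1; left.
by right; case: hM => _ _ h; apply: h.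
Qed.

Lemma lead_vmulm t (u : mvec K n m) o : is_lead ltM u o ->
  is_lead ltM (vmulm t u) (omap (tmul t) o).
Proof.
case: o => [y [hy h]|h] /=; last by move=> x; rewrite /vmulm h; case: ifP.
split; first by rewrite /vmulm /= mdvd_mmul mquo_mmul; case: y hy {h}.
move=> x; rewrite /vmulm; case: ifP => [td|_]; last by rewrite eqxx.
move=> /h; have ex : x = tmul t (mquo x.1 t, x.2) by case: x td => a i /= td; rewrite tmulE /= mmul_mquo.
by case=> [e|l]; [left; rewrite ex e | right; rewrite ex; exact: ltM_mul].
Qed.

Lemma lead_pmulm t (p : mpoly K n) o : is_lead ltR p o ->
  is_lead ltR (pmulm t p) (omap (mmul t) o).
Proof.
case: o => [y [hy h]|h] /=; last by move=> x; rewrite /pmulm h; case: ifP.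
split; first by rewrite /pmulm mdvd_mmul mquo_mmul.
move=> x; rewrite /pmulm; case: ifP => [td|_]; last by rewrite eqxx.
move=> /h; have ex : x = mmul t (mquo x t) by rewrite mmul_mquo.
by case=> [e|l]; [left; rewrite ex e | right; rewrite ex; exact: ltR_mul].
Qed.

Lemma lppM_vmulm t (u : mvec K n m) : fsupp u -> lppM ltM (vmulm t u) = omap (tmul t) (lppM ltM u).
Proof. by move=> /(lead_spec hM_strict) h; apply: (lead_eq hM_strict); apply: lead_vmulm. Qed.

Lemma lppR_pmulm t (p : mpoly K n) : fsupp p -> lppR ltR (pmulm t p) = omap (mmul t) (lppR ltR p).
Proof. by move=> /(lead_spec hR_strict) h; apply: (lead_eq hR_strict); apply: lead_pmulm. Qed.
End Orders.

From Stdlib Require Import Classical.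

Section Dickson.
Lemma min_above (v : nat -> nat) i : exists j, (i < j)%N /\ forall j', (i < j')%N -> (v j <= v j')%N.
Proof.
suff H : forall N, (exists j, (i < j)%N /\ (v j <= N)%N) -> exists j, (i < j)%N /\ forall j', (i < j')%N -> (v j <= v j')%N.
  by apply: (H (v i.+1)); exists i.+1.
elim=> [|N IH] [j [ij hj]].
  by exists j; split=> // j' _; move: hj; rewrite leqn0 => /eqP ->.
case: (classic (exists j, (i < j)%N /\ (v j <= N)%N)) => [/IH //|h].
exists j; split=> // j' ij'; apply: leq_trans hj _; rewrite leqNgt; apply/negP => hlt.
by apply: h; exists j'; split.
Qed.

Lemma extract (v : nat -> nat) : exists g : nat -> nat,
  (forall i, (g i < g i.+1)%N) /\ (forall i, (v (g i) <= v (g i.+1))%N).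
Proof.
pose nx i := proj1_sig (constructive_indefinite_description _ (min_above v i)).
have nxP i : (i < nx i)%N /\ forall j', (i < j')%N -> (v (nx i) <= v j')%N.
  exact: (proj2_sig (constructive_indefinite_description _ (min_above v i))).
pose g := fix g i := if i is i'.+1 then nx (g i') else nx 0.
exists g; split=> i; first by rewrite /= ; case: (nxP (g i)).
case: i => [|i] /=.
  case: (nxP 0) => h0 h1; apply: h1; case: (nxP (nx 0)) => h2 _; exact: ltn_trans h0 h2.
case: (nxP (g i)) => h0 h1; apply: h1; case: (nxP (nx (g i))) => h2 _; exact: ltn_trans h0 h2.
Qed.

Lemma dickson k (s : nat -> nat -> nat) :
  exists i j, (i < j)%N /\ forall c, (c < k)%N -> (s i c <= s j c)%N.
Proof.
elim: k s => [|k IH] s; first by exists 0%N, 1%N.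
have [g [gi gv]] := extract (fun i => s i k).
have [i [j [ij h]]] := IH (fun i c => s (g i) c).
have gmono : forall a b, (a < b)%N -> (g a < g b)%N /\ (s (g a) k <= s (g b) k)%N.
  move=> a b; elim: b => // b IHb; rewrite ltnS leq_eqVlt => /orP[/eqP ->|/IHb [h1 h2]].
    by split; [exact: gi | exact: gv].
  split; [exact: ltn_trans h1 (gi b) | exact: leq_trans h2 (gv b)].
exists (g i), (g j); case: (gmono i j ij) => h1 h2; split=> // c; rewrite ltnS leq_eqVlt.
by case/orP=> [/eqP ->|/h].
Qed.
End Dickson.

Section WF.
Variables (n m : nat) (ltM : rel (mterm n m)).
Hypothesis hM : is_module_term_order ltM.

Definition enc (x : mterm n m) (c : nat) : nat :=
  if (insub c : option 'I_n) is Some k then x.1 k else if (c - n == x.2)%N then 1%N else 0%N.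

Lemma wf_ltM : well_founded (fun x y => ltM x y).
Proof.
move=> x0; apply: NNPP => nacc.
have step : forall x : {x | ~ Acc (fun x y => ltM x y) x}, {y : {x | ~ Acc (fun x y => ltM x y) x} | ltM (proj1_sig y) (proj1_sig x)}.
  move=> [x hx]; apply: constructive_indefinite_description.
  apply: NNPP => hn; apply hx; constructor=> y hy; apply: NNPP => hy'.
  by apply: hn; exists (exist _ y hy').
pose ch := fix ch i := if i is i'.+1 then proj1_sig (step (ch i')) else exist _ x0 nacc.
have chS i : ltM (proj1_sig (ch i.+1)) (proj1_sig (ch i)) by exact: (proj2_sig (step (ch i))).
have chlt : forall i j, (i < j)%N -> ltM (proj1_sig (ch j)) (proj1_sig (ch i)).
  move=> i; elim=> // j IH; rewrite ltnS leq_eqVlt => /orP[/eqP ->|/IH h]; first exact: chS.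
  exact (lt_trans (hM_strict hM) (chS j) h).
have [i [j [ij h]]] := dickson (n + m) (fun i => enc (proj1_sig (ch i))).
move: (chlt i j ij) (h).
case: (proj1_sig (ch i)) => a ci; case: (proj1_sig (ch j)) => b cj /= lt_ji hh.
have ecomp : cj = ci.
  have := hh (n + ci)%N; rewrite ltn_add2l ltn_ord => /(_ isT); rewrite /enc.
  case: insubP => [k' /= + _|_]; first by rewrite ltnNge leq_addr.
  rewrite addKn eqxx; case: eqP => // /val_inj -> //.
have dv : mdvd a b.
  apply/mdvdP=> k; have := hh k; rewrite /enc.
  case: insubP => [k' _ /val_inj -> |]; last by rewrite ltn_ord.
  apply; exact: leq_trans (ltn_ord k) (leq_addr _ _).
have eb : (b, cj) = tmul (mquo b a) (a, ci) by rewrite ecomp tmulE /= mmul_mquor.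
case: (ltM_le_mul hM (mquo b a) (a, ci)); rewrite -eb.
  by move=> e; rewrite -e (negbTE (lt_irr (hM_strict hM) _)) in lt_ji.
by move=> l; case: (lt_asym (hM_strict hM) l lt_ji).
Qed.
End WF.

Section Alg.
Variables (K : fieldType) (n m : nat) (f : 'I_m -> mpoly K n).
Hypothesis hf : forall i, fsupp (f i).

Lemma inM_red (x y : lab K n m) c t : inM f x -> inM f y ->
  inM f (vsub x.1 (vscale c (vmulm t y.1)), psub x.2 (pscale c (pmulm t y.2))).
Proof.
case: x => x1 x2; case: y => y1 y2 [/= s1 s2 e1] [/= t1 t2 e2]; split => /=.
- by apply: fsupp_vsub => //; apply: fsupp_vscale; apply: fsupp_vmulm.
- by apply: fsupp_psub => //; apply: fsupp_pscale; apply: fsupp_pmulm.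
apply: functional_extensionality => a.
by rewrite vdot_sub vdot_scale vdot_mulm /psub /pscale e1 e2.
Qed.

Lemma inM_mulm (x : lab K n m) t : inM f x -> inM f (vmulm t x.1, pmulm t x.2).
Proof.
case: x => x1 x2 [/= s1 s2 e1]; split => /=; [exact: fsupp_vmulm | exact: fsupp_pmulm |].
by apply: functional_extensionality => a; rewrite vdot_mulm e1.
Qed.

Lemma inM_unit c : inM f (@unitv K n m c, f c).
Proof.
split => //=; first exact: fsupp_unitv.
by apply: functional_extensionality => a; rewrite vdot_unitv.
Qed.

Lemma inM_syz0 (i j : 'I_m) : inM f (vsub (vembed (f j) i) (vembed (f i) j), @pzero K n).
Proof.
split => /=; [by apply: fsupp_vsub; apply: fsupp_vembed | by apply: fsupp0 |].
apply: functional_extensionality => a.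
by rewrite vdot_sub !vdot_embed pmulC subrr.
Qed.

Lemma inM_syz (w : mvec K n m) h (i : 'I_m) : inM f (w, h) ->
  inM f (vsub (vembed h i) (pmulv (f i) w), @pzero K n).
Proof.
case=> /= sw sh e; split => /=; last first.
  apply: functional_extensionality => a.
  by rewrite vdot_sub vdot_embed vdot_pmulv -e pmulC subrr.
  by apply: fsupp0.
by apply: fsupp_vsub; [apply: fsupp_vembed | apply: fsupp_pmulv].
Qed.

Lemma inM_zero (x : lab K n m) : inM f x -> (forall z, x.1 z = 0) -> forall a, x.2 a = 0.
Proof. by case: x => x1 x2 [/= _ _ ->] h a; apply: vdot0. Qed.

Lemma fsupp_add (X : eqType) (A B : X -> K) : fsupp A -> fsupp B -> fsupp (fun x => A x + B x).
Proof.
move=> hA hB; have := fsupp_sub hA (fsupp_scale (-1) hB).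
case=> s h; exists s => x hx; apply: h; by rewrite mulN1r opprK.
Qed.

Lemma fsupp_pmul (p q : mpoly K n) : fsupp p -> fsupp q -> fsupp (pmul p q).
Proof.
move=> [s1 h1] [s2 h2]; exists [seq mmul d e | d <- s1, e <- s2] => b hb.
have [d [pd qd db]] := pmul_supp hb.
rewrite -(mmul_mquo db); apply: allpairs_f; [exact: h1 | exact: h2].
Qed.

Lemma fsupp_vcomp (u : mvec K n m) i : fsupp u -> fsupp (vcomp u i).
Proof.
move=> [s h]; exists (map fst s) => a ha; apply/mapP; exists (a, i) => //; exact: h.
Qed.

Lemma fsupp_vdot (u : mvec K n m) : fsupp u -> fsupp (vdot u f).
Proof.
move=> hu; rewrite /vdot; rewrite unlock /=.
elim: (index_enum _) => [|i r IH] /=; first by apply: fsupp0.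
apply: fsupp_add => //; apply: fsupp_pmul => //; exact: fsupp_vcomp.
Qed.
End Alg.

Section Main.
Variables (K : fieldType) (n m : nat) (ltR : rel (mono n)) (ltM : rel (mterm n m))
  (f : 'I_m -> mpoly K n) (ord : nat -> nat -> Prop).
Hypotheses (hR : is_term_order ltR) (hM : is_module_term_order ltM)
  (hf : forall i, fsupp (f i)) (hord : strict_partial_order ord).
Implicit Types (G s : seq (lab K n m)) (x : lab K n m).

Definition Done (G : seq (lab K n m)) (p : nat * nat) : Prop :=
  ~~ cp_regular ltR ltM G p \/ gen_rewritable ltR ltM ord G p \/
  exists2 j, (j < size G)%N & ord j p.1 /\ lppM ltM (gget G j).1 = cp_sig ltR ltM G p.1 p.2.

Definition allM (G : seq (lab K n m)) := forall k, (k < size G)%N -> inM f (gget G k).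

Lemma red1_inv G x (y : lab K n m) : allM G -> inM f x -> red1 ltR ltM G x y ->
  inM f y /\ lppM ltM y.1 = lppM ltM x.1.
Proof.
move=> hG hx [k [a [b [hk ha hb hab /= [hl ->]]]]]; split=> //.
by apply: inM_red => //; apply: hG.
Qed.

Lemma rt_inv G x (y : lab K n m) : allM G -> inM f x -> clos_refl_trans _ (red1 ltR ltM G) x y ->
  inM f y /\ lppM ltM y.1 = lppM ltM x.1.
Proof.
move=> hG hx h; elim: h hx => [x0 y0 h0 | x0 | x0 y0 z0 _ IH1 _ IH2] hx0 //.
  exact: red1_inv h0.
case: (IH1 hx0) => h1 e1; case: (IH2 h1) => h2 e2; split=> //; by rewrite e2.
Qed.

Lemma gget_cat G s k : (k < size G)%N -> gget (G ++ s) k = gget G k.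
Proof. by move=> h; rewrite /gget nth_cat h. Qed.

Lemma G_init_unit (c : 'I_m) : gget (G_init f) c = (@unitv K n m c, f c).
Proof.
rewrite /gget /G_init nth_cat size_map size_enum_ord ltn_ord.
by rewrite (nth_map c) ?size_enum_ord ?ltn_ord // nth_ord_enum.
Qed.

Lemma size_G_init : (m <= size (G_init f))%N.
Proof. by rewrite /G_init size_cat size_map size_enum_ord leq_addr. Qed.

Lemma nth_map_ex (A B : Type) (g : A -> B) (l : seq A) (d0 : B) i :
  (i < size (map g l))%N -> exists a, nth d0 (map g l) i = g a.
Proof. elim: l i => [|a l IH] [|i] //=; [by exists a | rewrite ltnS; apply: IH]. Qed.

Lemma G_init_syz k : (k < size (G_init f))%N -> (m <= k)%N ->
  (gget (G_init f) k).2 = @pzero K n /\ inM f (gget (G_init f) k).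
Proof.
move=> hk hm; rewrite /gget /G_init nth_cat size_map size_enum_ord ltnNge hm /=.
set s2 := [seq _ | _ <- _].
have hk' : (k - m < size s2)%N.
  move: hk hm; rewrite /G_init size_cat size_map size_enum_ord -/s2; move: (size s2) => z; lia.
have [[i j] ->] := nth_map_ex (lab0 K n m) hk'; split=> //; exact: inM_syz0.
Qed.

Lemma allM_init : allM (G_init f).
Proof.
move=> k hk; case: (ltnP k m) => km; last by case: (G_init_syz hk km).
by have := G_init_unit (Ordinal km) => /= ->; apply: inM_unit.
Qed.

Lemma mlcmC (a b : mono n) : mlcm a b = mlcm b a.
Proof. by apply: mono_eq => k; rewrite !mlcmE maxnC. Qed.

Lemma lcm_split (t t' b b' : mono n) : mmul t b = mmul t' b' ->
  mmul (mquo (mmul t b) (mlcm b b')) (mquo (mlcm b b') b) = t /\ mmul (mquo (mmul t b) (mlcm b b')) (mquo (mlcm b b') b') = t'.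
Proof.
move=> e; split; apply: mono_eq => k; have := congr1 (fun x : mono n => x k) e;
  rewrite !(mmulE, mquoE, mlcmE); lia.
Qed.

Lemma exists_min (P : nat -> Prop) N : (exists k, (k < N)%N /\ P k) ->
  exists k, [/\ (k < N)%N, P k & forall k', (k' < N)%N -> P k' -> ~ ord k' k].
Proof.
case: hord => irr tr.
elim: N => [[k [//]]|N IH] hex.
case: (classic (exists k, (k < N)%N /\ P k)) => [/IH [k0 [h0 p0 m0]]|hn].
  case: (classic (P N /\ ord N k0)) => [[pN oN]|hno].
    exists N; split=> // k' hk' pk' ok'.
    move: hk'; rewrite ltnS leq_eqVlt => /orP[/eqP e|hk'].
      by subst; apply: (irr N).
    by apply: (m0 k' hk' pk'); apply: tr ok' oN.
  exists k0; split=> //; first exact: ltn_trans h0 (ltnSn N).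
  move=> k'; rewrite ltnS leq_eqVlt => /orP[/eqP ->|/m0 //] pN oN; by apply: hno.
case: hex => k [hk pk]; have ekN : k = N.
  move: hk; rewrite ltnS leq_eqVlt => /orP[/eqP //|hk]; by case: hn; exists k.
subst k; exists N; split=> // k'; rewrite ltnS leq_eqVlt => /orP[/eqP -> _|hk' pk']; first exact: irr.
by case: hn; exists k'.
Qed.

Definition inD G (T : mterm n m) k := exists y, lppM ltM (gget G k).1 = Some y /\ tdvd y T.
Definition Dmin G (T : mterm n m) k := [/\ (k < size G)%N, inD G T k & forall k', (k' < size G)%N -> inD G T k' -> ~ ord k' k].

Lemma lpp_unitv (c : 'I_m) : lppM ltM (@unitv K n m c) = Some (mono1 n, c).
Proof.
apply: (lead_eq (hM_strict hM)); split; first by rewrite /unitv /vembed /= !eqxx oner_eq0.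
move=> [a i]; rewrite /unitv /vembed /=; case: ifP => [/eqP ->|_]; last by rewrite eqxx.
by case: ifP => [/eqP ->|_]; [left | rewrite eqxx].
Qed.

Definition hdone G := forall i k, (i < size G)%N -> (k < size G)%N -> i != k ->
  pnz ltR (gget G i).2 -> pnz ltR (gget G k).2 ->
  exists2 p, (p == cpair ltR ltM G i k) || (p == cpair ltR ltM G k i) & Done G p.

Section Final.
Variable G : seq (lab K n m).
Hypotheses (hpre : exists s, G = G_init f ++ s) (hG : allM G) (hD : hdone G).

Lemma Dmin_ex (T : mterm n m) : exists k, Dmin G T k.
Proof.
have hex : exists k, (k < size G)%N /\ inD G T k.
  exists T.2; case: hpre => s ->; split.
    by rewrite size_cat; apply: leq_trans (ltn_ord _) (leq_trans size_G_init (leq_addr _ _)).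
  exists (mono1 n, T.2); rewrite gget_cat; last by apply: leq_trans (ltn_ord _) size_G_init.
  by rewrite G_init_unit lpp_unitv /tdvd /= eqxx mdvd1.
have [k [hk pk mk]] := exists_min hex.
by exists k.
Qed.

Lemma no_lower (T T' : mterm n m) i k (y y' : mterm n m) (b b' : mono n) :
  Dmin G T i -> lppM ltM (gget G i).1 = Some y -> tdvd y T -> lppR ltR (gget G i).2 = Some b ->
  Dmin G T' k -> lppM ltM (gget G k).1 = Some y' -> tdvd y' T' -> lppR ltR (gget G k).2 = Some b' ->
  mmul (mquo T.1 y.1) b = mmul (mquo T'.1 y'.1) b' -> ltM T' T -> False.
Proof.
move=> [hi _ mi] hy hyT hb [hk _ mk] hy' hy'T hb' e lt'.
set t := mquo T.1 y.1 in e; set t' := mquo T'.1 y'.1 in e.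
have eT : T = tmul t y by exact: tdvd_tmul.
have eT' : T' = tmul t' y' by exact: tdvd_tmul.
have strM := hM_strict hM.
have ik : i != k.
  apply/eqP => ik; subst k; rewrite hy in hy'; case: hy' => ey; subst y'.
  rewrite hb in hb'; case: hb' => eb; subst b'.
  have tt : t = t' by apply: (@mmul_inj _ b); rewrite mmulC e mmulC.
  by move: lt'; rewrite eT eT' tt (negbTE (lt_irr strM _)).
have pzi : pnz ltR (gget G i).2 by rewrite /pnz hb.
have pzk : pnz ltR (gget G k).2 by rewrite /pnz hb'.
have [p hp dp] := hD hi hk ik pzi pzk.
set L := mlcm b b'; set t0 := mquo (mmul t b) L.
have [e1 e2] := lcm_split e; rewrite -/L -/t0 in e1 e2.
have ct1 : cp_t ltR G i k = mquo L b by rewrite /cp_t hb hb'.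
have ct2 : cp_t ltR G k i = mquo L b' by rewrite /cp_t hb' hb /L mlcmC.
have fsi : fsupp (gget G i).1 by case: (hG hi).
have fsk : fsupp (gget G k).1 by case: (hG hk).
have cs1 : cp_sig ltR ltM G i k = Some (tmul (mquo L b) y).
  by rewrite /cp_sig ct1 (lppM_vmulm hM) // hy.
have cs2 : cp_sig ltR ltM G k i = Some (tmul (mquo L b') y').
  by rewrite /cp_sig ct2 (lppM_vmulm hM) // hy'.
have eT2 : T = tmul t0 (tmul (mquo L b) y) by rewrite tmulA e1.
have eT2' : T' = tmul t0 (tmul (mquo L b') y') by rewrite tmulA e2.
have l12 : ltM (tmul (mquo L b') y') (tmul (mquo L b) y).
  by apply: (ltM_mul_inv hM (c := t0)); rewrite -eT2 -eT2'.
have cpik : cpair ltR ltM G i k = (i, k) by rewrite /cpair cs1 cs2 /= l12 orbT.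
have cpki : cpair ltR ltM G k i = (i, k).
  rewrite /cpair cs1 cs2 /=; case: ifP => // /orP[/eqP ee|ll].
    by move: l12; rewrite ee (negbTE (lt_irr strM _)).
  by case: (lt_asym strM ll l12).
move: hp; rewrite cpik cpki orbb => /eqP ep; subst p.
case: dp => [reg | [[rw|rw] | [j hj [oj sj]]]].
- by move: reg; rewrite /cp_regular /= cs1 cs2 /= l12.
- case: rw => k0 hk0 [od ok0]; move: od; rewrite ct1 (lppM_vmulm hM) // hy /=.
  case E: (lppM ltM (gget G k0).1) => [y0|] //= od.
  apply: (mi k0 hk0 _ ok0); exists y0; split=> //; apply: tdvd_trans od _.
  by rewrite eT2; exact: tdvd_tmulr.
- case: rw => k0 hk0 [od ok0]; move: od; rewrite /= ct2 (lppM_vmulm hM) // hy' /=.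
  case E: (lppM ltM (gget G k0).1) => [y0|] //= od.
  apply: (mk k0 hk0 _ ok0); exists y0; split=> //; apply: tdvd_trans od _.
  by rewrite eT2'; exact: tdvd_tmulr.
- apply: (mi j hj _ oj); exists (tmul (mquo L b) y); split; first by rewrite sj /= cs1.
  by rewrite eT2; exact: tdvd_tmulr.
Qed.

Lemma nz_ex (p : mpoly K n) : p <> @pzero K n -> exists a, p a != 0.
Proof.
move=> h; apply: NNPP => hn; apply: h; apply: functional_extensionality => a.
apply/eqP; apply: contraT => ha; case: hn; by exists a.
Qed.

Lemma sig_some x (T : mterm n m) : inM f x -> olt ltM (lppM ltM x.1) (Some T) ->
  (exists a, x.2 a != 0) -> exists T', lppM ltM x.1 = Some T' /\ ltM T' T.
Proof.
move=> hx; case E: (lppM ltM x.1) => [T'|] //= hl; first by exists T'.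
case=> a; rewrite (inM_zero hx) ?eqxx //.
by apply: (lead_None (hM_strict hM) E); case: hx.
Qed.

Definition cover x (T' : mterm n m) k (y : mterm n m) (b a : mono n) :=
  [/\ Dmin G T' k, lppM ltM (gget G k).1 = Some y, tdvd y T', lppR ltR (gget G k).2 = Some b &
   [/\ lppR ltR x.2 = Some a, mmul (mquo T'.1 y.1) b = a & ole ltM (Some T') (lppM ltM x.1)]].

Lemma claim (T : mterm n m) : forall x, inM f x -> lppM ltM x.1 = Some T -> x.2 <> @pzero K n ->
  exists T' k y b a, cover x T' k y b a.
Proof.
have strM := hM_strict hM; have strR := hR_strict hR.
elim/(well_founded_induction (wf_ltM hM)): T => T IH x hx hsig hnz.
have [i [hi [y [hy hyT]] mi]] := Dmin_ex T.
have hGi := hG hi.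
have [fsv fsg _] := hGi.
have [fsx1 fsx2 _] := hx.
set v := (gget G i).1 in hy fsv; set g := (gget G i).2 in fsg.
set t := mquo T.1 y.1.
have eT : T = tmul t y by exact: tdvd_tmul.
have hvl : is_lead ltM (vmulm t v) (Some T).
  rewrite eT -[Some (tmul t y)]/(omap (tmul t) (Some y)); apply: (lead_vmulm hM).
  by rewrite -hy; apply: lead_spec.
have hxl : is_lead ltM x.1 (Some T) by rewrite -hsig; apply: lead_spec.
set c := x.1 T / vmulm t v T.
set x' := (vsub x.1 (vscale c (vmulm t v)), psub x.2 (pscale c (pmulm t g))).
have hx' : inM f x' by apply: inM_red.
have [fsx'1 fsx'2 _] := hx'.
have sig' : olt ltM (lppM ltM x'.1) (Some T).
  apply: olt_lead_of => // z hz; exact (lead_sub_cancel hxl hvl hz).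
have lt_ole : forall T'' T', ole ltM (Some T'') (Some T') -> ltM T' T -> ole ltM (Some T'') (lppM ltM x.1).
  move=> T'' T' /= /orP[/eqP -> l2|l1 l2]; rewrite hsig /=; apply/orP; right; first exact: l2.
  exact: (lt_trans strM l1 l2).
have [a ha] : exists a, lppR ltR x.2 = Some a.
  by apply: (lead_nz strR) => //; apply: nz_ex.
have hfl : is_lead ltR x.2 (Some a) by rewrite -ha; apply: lead_spec.
case Eg: (lppR ltR g) => [b|].
  have hgl : is_lead ltR (pmulm t g) (Some (mmul t b)).
    by rewrite -[Some _]/(omap (mmul t) (Some b)) -Eg; apply: (lead_pmulm hR); apply: lead_spec.
  have [eab|neab] := eqVneq a (mmul t b).
    exists T, i, y, b, a; split => //; first by split=> //; exists y.
    by split => //; rewrite hsig /= eqxx.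
  case/orP: (lt_total strR neab) => lab.
    have hfl' : is_lead ltR x'.2 (Some (mmul t b)).
      apply: (lead_sub_high strR hfl hgl lab).
      rewrite mulf_neq0 ?invr_eq0; [by [] | by case: hxl | by case: hvl].
    have [T' [hs' lT']] := sig_some hx' sig' (ex_intro (fun a0 => x'.2 a0 != 0) _ hfl'.1).
    have [T'' [k [y'' [b'' [a'' [hDk hy'' hyT'' hb'' [ha'' e'' ole'']]]]]]] :=
      IH T' lT' x' hx' hs' (fun e => ltac:(by move: hfl'.1; rewrite e /pzero eqxx)).
    have ea'' : a'' = mmul t b.
      have e1 : lppR ltR x'.2 = Some (mmul t b) := lead_eq strR hfl'.
      by move: ha''; rewrite e1 => -[].
    exfalso; have hDi : Dmin G T i by split=> //; exists y.
    apply: (no_lower hDi hy hyT Eg hDk hy'' hyT'' hb'').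
      by rewrite e'' ea''.
    move: ole''; rewrite hs' /= => /orP[/eqP -> //|l1]; exact: (lt_trans strM l1 lT').
  have hfl' : is_lead ltR x'.2 (Some a) := lead_sub_low strR c hfl hgl lab.
  have [T' [hs' lT']] := sig_some hx' sig' (ex_intro (fun a0 => x'.2 a0 != 0) _ hfl'.1).
  have [T'' [k [y'' [b'' [a'' [hDk hy'' hyT'' hb'' [ha'' e'' ole'']]]]]]] :=
    IH T' lT' x' hx' hs' (fun e => ltac:(by move: hfl'.1; rewrite e /pzero eqxx)).
  have ea'' : a'' = a.
    have e1 : lppR ltR x'.2 = Some a := lead_eq strR hfl'.
    by move: ha''; rewrite e1 => -[].
  exists T'', k, y'', b'', a''; split=> //; split=> //; first by rewrite ea''.
  apply: (lt_ole _ T') => //; by rewrite -hs'.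
have g0 : forall z, g z = 0 by apply: (lead_None strR Eg).
have ex2 : x'.2 = x.2.
  apply: functional_extensionality => z; rewrite /x' /= /psub /pscale /pmulm.
  by case: ifP => _; rewrite ?g0 mulr0 subr0.
have [T' [hs' lT']] := sig_some hx' sig' (ex_intro (fun a0 => x'.2 a0 != 0) _ (ltac:(rewrite ex2; exact: hfl.1))).
have [T'' [k [y'' [b'' [a'' [hDk hy'' hyT'' hb'' [ha'' e'' ole'']]]]]]] :=
  IH T' lT' x' hx' hs' (ltac:(by rewrite ex2)).
exists T'', k, y'', b'', a''; split=> //; split=> //; first by rewrite -ex2.
apply: (lt_ole _ T') => //; by rewrite -hs'.
Qed.

Lemma final_SGB : is_SGB ltR ltM f G.
Proof.
split; first exact: hG.
move=> x hx hnz; have [fs1 fs2 _] := hx.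
case E: (lppM ltM x.1) => [T|]; last first.
  exfalso; apply: hnz; apply: functional_extensionality => a.
  by apply: (inM_zero hx); apply: (lead_None (hM_strict hM) E).
have [T' [k [y [b [a [[hk _ _] hy hyT hb [ha e ole']]]]]]] := claim hx E hnz.
exists k, a, b; split=> //; first by rewrite -e; exact: mdvd_mmulr.
have fsk : fsupp (gget G k).1 by case: (hG hk).
rewrite (lppM_vmulm hM) // hy /= -e mquo_mmulr -(tdvd_tmul hyT); by move: ole'; rewrite E.
Qed.

Lemma final_GB : is_GB ltR f [seq x.2 | x <- G].
Proof.
have nthE : forall k, (k < size G)%N -> nth (@pzero K n) [seq x.2 | x <- G] k = (gget G k).2.
  by move=> k hk; rewrite (nth_map (lab0 K n m)).
split.
  move=> k; rewrite size_map => hk; rewrite nthE //.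
  have [s1 s2 e] := hG hk; by exists (gget G k).1.
move=> p [u [fu ep]] hnz.
have hx : inM f (u, p) by split=> //=; rewrite ep; apply: fsupp_vdot.
have [_ h] := final_SGB.
have [k [a [b [hk ha hb hab _]]]] := h (u, p) hx hnz.
by exists k, a, b; split; rewrite ?size_map ?nthE.
Qed.
End Final.

Lemma cp_t_ext G s i k : (i < size G)%N -> (k < size G)%N -> cp_t ltR (G ++ s) i k = cp_t ltR G i k.
Proof. by move=> hi hk; rewrite /cp_t !gget_cat. Qed.
Lemma cp_sig_ext G s i k : (i < size G)%N -> (k < size G)%N ->
  cp_sig ltR ltM (G ++ s) i k = cp_sig ltR ltM G i k.
Proof. by move=> hi hk; rewrite /cp_sig cp_t_ext // gget_cat. Qed.
Lemma cpair_ext G s i k : (i < size G)%N -> (k < size G)%N ->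
  cpair ltR ltM (G ++ s) i k = cpair ltR ltM G i k.
Proof. by move=> hi hk; rewrite /cpair !cp_sig_ext. Qed.
Lemma cpair_idx G i k : cpair ltR ltM G i k = (i, k) \/ cpair ltR ltM G i k = (k, i).
Proof. by rewrite /cpair; case: ifP; [left | right]. Qed.

Lemma Done_ext G s p : (p.1 < size G)%N -> (p.2 < size G)%N -> Done G p -> Done (G ++ s) p.
Proof.
case: p => i k /= hi hk [reg|[[rw|rw]|[j hj [oj sj]]]].
- by left; rewrite /cp_regular /= !cp_sig_ext.
- right; left; left; case: rw => k0 hk0 [od ok0]; exists k0.
    by rewrite size_cat ltn_addr.
  by rewrite /= cp_t_ext // !gget_cat.
- right; left; right; case: rw => k0 hk0 [od ok0]; exists k0.
    by rewrite size_cat ltn_addr.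
  by rewrite /= cp_t_ext // !gget_cat.
- right; right; exists j; first by rewrite size_cat ltn_addr.
  by rewrite /= gget_cat // cp_sig_ext.
Qed.

Lemma lppR_pzero : lppR ltR (@pzero K n) = None.
Proof. by apply: (lead_eq (hR_strict hR)). Qed.

Lemma gget_last G x : gget (G ++ [:: x]) (size G) = x.
Proof. by rewrite /gget nth_cat ltnn subnn. Qed.

Lemma mem_remove_at (CP : seq (nat * nat)) k q : (k < size CP)%N -> q \in CP ->
  q = nth (0%N, 0%N) CP k \/ q \in remove_at CP k.
Proof.
move=> hk; rewrite -{1}(cat_take_drop k CP) (drop_nth (0%N, 0%N) hk) mem_cat inE.
rewrite /remove_at mem_cat; case/orP=> [->|/orP[/eqP->|->]]; by [right | left | right; rewrite orbT].
Qed.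

Lemma remove_at_sub (CP : seq (nat * nat)) k q : q \in remove_at CP k -> q \in CP.
Proof.
by rewrite /remove_at mem_cat => /orP[/mem_take //|/mem_drop //].
Qed.

Definition Inv (st : state K n m) : Prop :=
  [/\ exists s, st.1 = G_init f ++ s, allM st.1,
      forall p, p \in st.2 -> (p.1 < size st.1)%N /\ (p.2 < size st.1)%N &
      forall i k, (i < size st.1)%N -> (k < size st.1)%N -> i != k ->
        pnz ltR (gget st.1 i).2 -> pnz ltR (gget st.1 k).2 ->
        exists2 p, (p == cpair ltR ltM st.1 i k) || (p == cpair ltR ltM st.1 k i) &
          (p \in st.2 \/ Done st.1 p)].


Lemma Inv_init : Inv (G_init f, CP_init ltR ltM f).
Proof.
have lowm : forall i, (i < size (G_init f))%N -> pnz ltR (gget (G_init f) i).2 -> (i < m)%N.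
  move=> i hi; case: (ltnP i m) => // im; case: (G_init_syz hi im) => -> _.
  by rewrite /pnz lppR_pzero.
split => /=.
- by exists [::]; rewrite cats0.
- exact: allM_init.
- move=> p /mapP [[i j]]; rewrite mem_filter => /andP[_ /allpairsP [[i' j']]] /=.
  case=> /[!mem_iota] /= hi hj [-> ->] ->.
  have hi' : (i' < size (G_init f))%N by apply: leq_trans hi size_G_init.
  have hj' : (j' < size (G_init f))%N by apply: leq_trans hj size_G_init.
  by case: (cpair_idx (G_init f) i' j') => ->.
move=> i k hi hk ik pi pk.
have im := lowm i hi pi; have km := lowm k hk pk.
case: (ltngtP i k) => [lik|lki|eik]; last by rewrite eik eqxx in ik.
- exists (cpair ltR ltM (G_init f) i k); first by rewrite eqxx.
  left; apply/mapP; exists (i, k) => //; rewrite mem_filter /= lik pi pk /=.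
  by apply: allpairs_f; rewrite mem_iota.
- exists (cpair ltR ltM (G_init f) k i); first by rewrite eqxx orbT.
  left; apply/mapP; exists (k, i) => //; rewrite mem_filter /= lki pi pk /=.
  by apply: allpairs_f; rewrite mem_iota.
Qed.


Lemma pair_idx G i j (q : nat * nat) : (i < size G)%N -> (j < size G)%N ->
  (q == cpair ltR ltM G i j) || (q == cpair ltR ltM G j i) -> (q.1 < size G)%N /\ (q.2 < size G)%N.
Proof.
move=> hi hj /orP[/eqP ->|/eqP ->].
  by case: (cpair_idx G i j) => ->.
by case: (cpair_idx G j i) => ->.
Qed.

Lemma spoly_inM G p : allM G -> (p.1 < size G)%N -> (p.2 < size G)%N -> inM f (spoly ltR G p).
Proof.
move=> hG h1 h2; rewrite /spoly.
exact: (inM_red _ _ (inM_mulm (cp_t ltR G p.1 p.2) (hG _ h1)) (hG _ h2)).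
Qed.

Lemma spoly_lpp G p : allM G -> (p.1 < size G)%N -> (p.2 < size G)%N -> cp_regular ltR ltM G p ->
  lppM ltM (spoly ltR G p).1 = cp_sig ltR ltM G p.1 p.2.
Proof.
move=> hG h1 h2; have strM := hM_strict hM.
rewrite /cp_regular; case E1: (cp_sig ltR ltM G p.1 p.2) => [a|]; last by case: (cp_sig ltR ltM G p.2 p.1).
move=> reg.
have [fs1 _ _] := hG _ h1; have [fs2 _ _] := hG _ h2.
have hA : is_lead ltM (vmulm (cp_t ltR G p.1 p.2) (gget G p.1).1) (Some a).
  by rewrite -E1; apply: (lead_spec strM); apply: fsupp_vmulm.
have hB := lead_spec strM (fsupp_vmulm (cp_t ltR G p.2 p.1) fs2).
apply: (lead_eq strM); exact: (lead_sub_low strM _ hA hB reg).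
Qed.


Lemma Inv_step st st' : Inv st -> gbgc_step ltR ltM f ord st st' -> Inv st'.
Proof.
case: st => G CP [/= hpre hG hCP hP] [k hk] /=.
set p := nth (0%N, 0%N) CP k; set CP0 := remove_at CP k.
have pin : p \in CP by apply: mem_nth.
have [p1 p2] := hCP p pin.
have memCP q : q \in CP -> q = p \/ q \in CP0 by apply: mem_remove_at.
have subCP q : q \in CP0 -> q \in CP by apply: remove_at_sub.
case=> [[hdone ->] | [reg [nrw [w [h [hred hcase]]]]]].
  split => //=.
    by move=> q /subCP; apply: hCP.
  move=> i j hi hj ij pi pj; have [q hq qd] := hP i j hi hj ij pi pj; exists q => //.
  case: qd => [qin|qd]; last by right.
  case: (memCP q qin) => [eq|q0]; last by left.
  by right; rewrite eq; case: hdone => [r|rw]; [left | right; left].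
have hsp := spoly_inM hG p1 p2.
have [hw lw] := rt_inv hG hsp hred.1.
have lsp := spoly_lpp hG p1 p2 reg.
have pDone : forall s j, (j < size (G ++ s))%N -> ord j p.1 -> gget (G ++ s) j = (w, h) ->
    Done (G ++ s) p.
  move=> s j hj oj gj; right; right; exists j => //; split=> //.
  by rewrite gj /= lw lsp cp_sig_ext.
have oldP : forall s jN, (jN < size (G ++ s))%N -> ord jN p.1 -> gget (G ++ s) jN = (w, h) ->
    forall i j, (i < size G)%N -> (j < size G)%N -> i != j ->
    pnz ltR (gget G i).2 -> pnz ltR (gget G j).2 ->
    exists2 q, (q == cpair ltR ltM (G ++ s) i j) || (q == cpair ltR ltM (G ++ s) j i) &
      (q \in CP0 \/ Done (G ++ s) q).
  move=> s jN hjN ojN gjN i j hi hj ij pi pj.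
  have [q hq qd] := hP i j hi hj ij pi pj.
  exists q; first by rewrite !cpair_ext.
  case: qd => [qin|qd].
    case: (memCP q qin) => [eq|q0]; last by left.
    by right; rewrite eq; apply: (pDone s jN).
  right; have [q1 q2] := pair_idx hi hj hq; exact: Done_ext.
case: hcase => [[h0 [-> ord1]] | [hn0 [-> ordN]]].
  rewrite -cats1.
  have gl : gget (G ++ [:: (w, h)]) (size G) = (w, h) by apply: gget_last.
  have sz : size (G ++ [:: (w, h)]) = (size G).+1 by rewrite size_cat addn1.
  have lt_old : forall l, (l < size (G ++ [:: (w, h)]))%N -> pnz ltR (gget (G ++ [:: (w, h)]) l).2 -> (l < size G)%N.
    move=> l; rewrite sz ltnS leq_eqVlt => /orP[/eqP ->|//]; by rewrite gl h0 /pnz lppR_pzero.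
  split => /=.
  - by case: hpre => s ->; exists (s ++ [:: (w, h)]); rewrite catA.
  - move=> j; rewrite sz ltnS leq_eqVlt => /orP[/eqP ->|hj]; first by rewrite gl.
    by rewrite gget_cat //; apply: hG.
  - move=> q /subCP /hCP [a b]; rewrite sz; split; exact: ltnW.
  move=> i j hi hj ij pi pj.
  have hi' := lt_old i hi pi; have hj' := lt_old j hj pj.
  rewrite !gget_cat // in pi pj.
  apply: (oldP [:: (w, h)] (size G)) => //; by rewrite sz.
set S := syz_new f w h.
have sS : size S = m by rewrite /S /syz_new size_map size_enum_ord.
rewrite -cats1 -catA.
set G' := G ++ (S ++ [:: (w, h)]).
have sz : size G' = (size G + m).+1 by rewrite /G' !size_cat sS addn1 addnS.
have gN : gget G' (size G + m) = (w, h).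
  by rewrite /G' /gget nth_cat ltnNge leq_addr /= addKn nth_cat sS ltnn subnn.
have gS : forall l, (size G <= l)%N -> (l < size G + m)%N ->
    (gget G' l).2 = @pzero K n /\ inM f (gget G' l).
  move=> l h1 h2; rewrite /G' /gget nth_cat ltnNge h1 /= nth_cat sS.
  have h3 : (l - size G < m)%N by lia.
  have h4 : (l - size G < size (syz_new f w h))%N by rewrite -/S sS.
  rewrite h3 /S; have [i ->] := nth_map_ex (lab0 K n m) h4.
  by split=> //; apply: inM_syz.
have cls : forall l, (l < size G')%N -> pnz ltR (gget G' l).2 -> (l < size G)%N \/ l = (size G + m)%N.
  move=> l; rewrite sz ltnS leq_eqVlt => /orP[/eqP ->|hl]; first by right.
  case: (ltnP l (size G)) => [hl' _|hg]; first by left.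
  by case: (gS l hg hl) => -> _; rewrite /pnz lppR_pzero.
have pnzN : pnz ltR (gget G' (size G + m)).2.
  rewrite gN /pnz /=; have [a ha] := nz_ex hn0.
  have [fw fh _] := hw; have [b hb] := lead_nz (hR_strict hR) fh (ex_intro _ a ha); by rewrite /lppR hb.
split => /=.
- by rewrite /G'; case: hpre => s ->; exists (s ++ (S ++ [:: (w, h)])); rewrite -catA.
- move=> j; rewrite sz ltnS leq_eqVlt => /orP[/eqP ->|hj]; first by rewrite gN.
  case: (ltnP j (size G)) => [hjG|hg]; last by case: (gS j hg hj).
  by rewrite /G' gget_cat //; apply: hG.
- move=> q; rewrite mem_cat => /orP[/subCP /hCP [a b]|].
    by rewrite sz; split; lia.
  move=> /mapP [l]; rewrite mem_filter mem_iota /= => /andP[_ hl] ->.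
  have hl' : (l < size G')%N by rewrite sz; lia.
  by case: (cpair_idx G' (size G + m) l) => ->; rewrite sz /=; split; lia.
move=> i j hi hj ij pi pj.
have newmem : forall l, (l < size G)%N -> pnz ltR (gget G' l).2 ->
    cpair ltR ltM G' (size G + m) l \in
    CP0 ++ [seq cpair ltR ltM G' (size G + m) l0 | l0 <- iota 0 (size G) & pnz ltR (gget G l0).2].
  move=> l hl pl; rewrite /G' gget_cat // in pl; rewrite mem_cat; apply/orP; right; apply: map_f.
  rewrite mem_filter mem_iota pl /=; lia.
case: (cls i hi pi) => [hi'|ei]; case: (cls j hj pj) => [hj'|ej].
- rewrite /G' !gget_cat // in pi pj.
  have [q hq qd] := oldP (S ++ [:: (w, h)]) (size G + m) (ltac:(by rewrite -/G' sz)) ordN gN i j hi' hj' ij pi pj.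
  exists q => //; case: qd => [qin|qd]; [by left; rewrite mem_cat qin | by right].
- rewrite ej; exists (cpair ltR ltM G' (size G + m) i); first by rewrite eqxx orbT.
  by left; apply: newmem.
- rewrite ei; exists (cpair ltR ltM G' (size G + m) j); first by rewrite eqxx.
  by left; apply: newmem.
by rewrite ei ej eqxx in ij.
Qed.

End Main.
Lemma Inv_rt (K : fieldType) (n m : nat) (ltR : rel (mono n)) (ltM : rel (mterm n m))
  (f : 'I_m -> mpoly K n) (ord : nat -> nat -> Prop) :
  is_term_order ltR -> is_module_term_order ltM -> (forall i, fsupp (f i)) ->
  strict_partial_order ord -> forall st st',
  clos_refl_trans (state K n m) (gbgc_step ltR ltM f ord) st st' ->
  Inv ltR ltM f ord st -> Inv ltR ltM f ord st'.
Proof.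
move=> hR hM hf hord st st' h; elim: h => [x y hs | x | x y z _ IH1 _ IH2] hI //.
  exact: Inv_step hI hs.
exact: IH2 (IH1 hI).
Qed.

Theorem theorem1 (K : fieldType) (n m : nat)
  (ltR : rel (mono n)) (ltM : rel (mterm n m))
  (f : 'I_m -> mpoly K n) (ord : nat -> nat -> Prop) (Gfin : seq (lab K n m)) :
  is_term_order ltR ->
  is_module_term_order ltM ->
  (forall i, fsupp (f i)) ->
  strict_partial_order ord ->
  clos_refl_trans (state K n m) (gbgc_step ltR ltM f ord)
    (G_init f, CP_init ltR ltM f) (Gfin, [::]) ->
  is_SGB ltR ltM f Gfin /\ is_GB ltR f [seq x.2 | x <- Gfin].
Proof.
move=> hR hM hf hord hrun.
have [/= hpre hG _ hP] := Inv_rt hR hM hf hord hrun (Inv_init ltM ord hR hf).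
have hD : hdone ltR ltM ord Gfin.
  move=> i k hi hk ik pi pk; have [p hp [//|dp]] := hP i k hi hk ik pi pk.
  by exists p.
split; [exact: (final_SGB hR hM hord hpre hG hD) | exact: (final_GB hR hM hf hord hpre hG hD)].
Qed.
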